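(* In the simplified model with conditional inclusion lists, regardless of the payment rule, if $$B_1> f_{BP}+ r\cdot s\cdot\max\{c_{block}-w+1,\ 0\},$$ then censoring $t_0$ (omitting it from the block, while keeping the block approved) is a dominant strategy for the block producer; consequently there is no Nash equilibrium in which $t_0$ is included in the block.
   Context: Simplified model (single slot, complete information, Nash equilibrium). Players: a block producer and $m$ includers with distinct orders $1,\dots,m$. A mempool $M$ of $w$ user transactions, each of size $s>0$; $t_0\in M$ is a target transaction. Each inclusion list holds at most $c_{Incl}$ transactions and the block at most $c_{block}$. Each includer chooses an inclusion list consisting of transactions from $M$ and/or fake transactions it creates; then the block producer, seeing all lists, chooses a block consisting of transactions from $M$ and/or fake transactions it creates. No party may add transactions to the mempool. Every transaction in an approved block pays burning fee $r\cdot s$ ($r\ge0$); for fake transactions this is paid by their creator. Processing costs are zero. Conditional inclusion lists: the attesters reject the block iff some transaction appearing in an inclusion list is missing from the block while the block contains fewer than $c_{block}$ transactions. Unconditional inclusion lists: the block is rejected iff some transaction in an inclusion list is missing from the block. If the block is rejected, the block producer and includers receive no fees. Payments: if $t_0$ is in an approved block, the block producer receives $f_{BP}\ge0$ from $t_0$ (whether or not $t_0$ is in a list); the includers collectively receive at most $f_{CM}\ge0$ from $t_0$, and only if $t_0$ is in some inclusion list and in the approved block. $sum$ denotes the block producer's total block rewards (sum of its fees from its block). An external briber pays the block producer $B_1$ if $t_0$ is not in its block, and pays includer $j$ the amount $B^j$ if $t_0$ is not in its inclusion list. Each player's utility is fees received plus bribes received minus burning fees paid for its own fake transactions in an approved block.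 *)

(* Defs.v *)
From HB Require Import structures.
From mathcomp Require Import all_boot all_order all_algebra.
Set Implicit Arguments. Unset Strict Implicit. Unset Printing Implicit Defensive.
Import Order.TTheory GRing.Theory Num.Theory.
Local Open Scope ring_scope.

(* Transactions: the mempool M consists of the w distinct user transactions
   [inl i], i : 'I_w.  Fake transactions are [inr (c, k)] where the creator
   c is [None] for the block producer and [Some j] for includer j, and
   k : nat is an arbitrary index (parties may create as many fakes as they
   like).  All transactions have the same size s. *)
Definition tx (w m : nat) := ('I_w + (option 'I_m * nat))%type.

Section Game.
Variables (w m : nat).

Definition is_mempool (t : tx w m) : bool := if t is inl _ then true else false.
Definition fake_of_BP (t : tx w m) : bool :=
  if t is inr (None, _) then true else false.
Definition fake_of (j : 'I_m) (t : tx w m) : bool :=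
  if t is inr (Some j', _) then j' == j else false.

Definition profile := 'I_m -> seq (tx w m).

Definition valid_list (cI : nat) (j : 'I_m) (l : seq (tx w m)) : bool :=
  [&& uniq l, (size l <= cI)%N & all (fun t => is_mempool t || fake_of j t) l].

Definition valid_profile (cI : nat) (L : profile) : Prop :=
  forall j, valid_list cI j (L j).

Definition valid_block (cB : nat) (b : seq (tx w m)) : bool :=
  [&& uniq b, (size b <= cB)%N & all (fun t => is_mempool t || fake_of_BP t) b].

Definition approved_cond (cB : nat) (L : profile) (b : seq (tx w m)) : bool :=
  (cB <= size b)%N || [forall j, all (fun t => t \in b) (L j)].

Variable R : realFieldType.

(* Block producer's utility.  pBP i L = fee the block producer receives from
   mempool transaction i (when it is in an approved block) under the payment
   rule, given the inclusion lists L. *)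
Definition u_BP (cB : nat) (t0 : 'I_w) (r s B1 : R)
    (pBP : 'I_w -> profile -> R) (L : profile) (b : seq (tx w m)) : R :=
  (if approved_cond cB L b
   then (\sum_(i < w | inl i \in b) pBP i L) - r * s * (count fake_of_BP b)%:R
   else 0)
  + (if (inl t0 : tx w m) \in b then 0 else B1).

(* Includer j's utility.  pI j i L = fee includer j receives from mempool
   transaction i (when it is in an approved block). *)
Definition u_I (cB : nat) (t0 : 'I_w) (r s : R) (Bj : 'I_m -> R)
    (pI : 'I_m -> 'I_w -> profile -> R) (j : 'I_m)
    (L : profile) (b : seq (tx w m)) : R :=
  (if approved_cond cB L b
   then (\sum_(i < w | inl i \in b) pI j i L) - r * s * (count (fake_of j) b)%:R
   else 0)
  + (if (inl t0 : tx w m) \in L j then 0 else Bj j).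

Definition upd (L : profile) (j : 'I_m) (l : seq (tx w m)) : profile :=
  fun k => if k == j then l else L k.

(* Nash equilibrium: includers choose lists L, the block producer (who moves
   after seeing the lists) chooses a strategy beta : profile -> block. *)
Definition is_NE (cI cB : nat) (t0 : 'I_w) (r s B1 : R) (Bj : 'I_m -> R)
    (pBP : 'I_w -> profile -> R) (pI : 'I_m -> 'I_w -> profile -> R)
    (L : profile) (beta : profile -> seq (tx w m)) : Prop :=
  [/\ valid_profile cI L,
      (forall L', valid_profile cI L' -> valid_block cB (beta L')),
      (forall b, valid_block cB b ->
         u_BP cB t0 r s B1 pBP L b <= u_BP cB t0 r s B1 pBP L (beta L)) &
      (forall j l, valid_list cI j l ->
         u_I cB t0 r s Bj pI j (upd L j l) (beta (upd L j l))
         <= u_I cB t0 r s Bj pI j L (beta L))].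

End Game.

(* Main.v *)
Require Import Defs.
From HB Require Import structures.
From mathcomp Require Import all_boot all_order all_algebra.
From mathcomp Require Import zify.
From mathcomp Require Import lra.
Import Order.TTheory GRing.Theory Num.Theory.
Local Open Scope ring_scope.

Lemma seq_max (T : eqType) (R : realDomainType) (P : pred T) (F : T -> R) (s : seq T) x0 :
  P x0 -> exists2 x, P x & forall y, y \in s -> P y -> F y <= F x.
Proof.
move=> Px0; elim: s => [|a s [x Px Hx]]; first by exists x0.
case Pa: (P a); last first.
  exists x => // y; rewrite inE => /orP[/eqP->|ys]; [by rewrite Pa|exact: Hx].
case: (lerP (F a) (F x)) => Hax.
  exists x => // y; rewrite inE => /orP[/eqP-> //|ys Py]; exact: Hx.
exists a => // y; rewrite inE => /orP[/eqP-> //|ys Py].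
apply: le_trans (Hx y ys Py) (ltW Hax).
Qed.

Lemma fin_max (T : finType) (R : realDomainType) (P : pred T) (F : T -> R) x0 :
  P x0 -> exists2 x, P x & forall y, P y -> F y <= F x.
Proof.
move=> Px0; have [x Px Hx] := @seq_max T R P F (enum T) x0 Px0.
by exists x => // y; apply: Hx; rewrite mem_enum.
Qed.

Lemma extend_set (T : finType) (D A : {set T}) k :
  A \subset D -> (#|A| <= k <= #|D|)%N ->
  exists A' : {set T}, [/\ A \subset A', A' \subset D & #|A'| = k].
Proof.
move=> AD /andP[]; move Hn: (k - #|A|)%N => n.
elim: n A AD Hn => [|n IH] A AD Hn Ak kD.
  by exists A; split => //; apply/eqP; rewrite eqn_leq Ak /=; rewrite -subn_eq0 Hn.
have [x xD xA] : exists2 x, x \in D & x \notin A.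
  have : (0 < #|D :\: A|)%N.
    rewrite cardsD (setIidPr AD) subn_gt0 (leq_trans _ kD) //.
    by rewrite -subn_gt0 Hn.
  by rewrite card_gt0 => /set0Pn [x]; rewrite inE => /andP[xA xD]; exists x.
have h1' : x |: A \subset D by rewrite subUset sub1set xD AD.
have h2' : (k - #|x |: A|)%N = n by rewrite cardsU1 xA add1n subnS Hn.
have h3' : (#|x |: A| <= k)%N by rewrite cardsU1 xA add1n -subn_gt0 Hn.
have [A' [h1 h2 h3]] := IH (x |: A) h1' h2' h3' kD.
exists A'; split => //; apply: subset_trans h1; exact: subsetUr.
Qed.

Theorem mainTheorem6 (R : realFieldType) (w m cI cB : nat) (t0 : 'I_w)
    (s r fBP fCM B1 : R) (Bj : 'I_m -> R)
    (pBP : 'I_w -> profile w m -> R) (pI : 'I_m -> 'I_w -> profile w m -> R) :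
  0 < s -> 0 <= r -> 0 <= fBP -> 0 <= fCM ->
  (* payment rule: BP gets fBP from t0, nonnegative fees from every tx *)
  (forall L, pBP t0 L = fBP) ->
  (forall i L, 0 <= pBP i L) ->
  (* includers collectively get at most fCM from t0, and nothing if t0 is
     in no inclusion list *)
  (forall j L, 0 <= pI j t0 L) ->
  (forall L, \sum_(j < m) pI j t0 L <= fCM) ->
  (forall L, (forall j, (inl t0 : tx w m) \notin L j) -> forall j, pI j t0 L = 0) ->
  fBP + r * s * Num.max (cB%:R - w%:R + 1) 0 < B1 ->
  (* censoring t0 (with an approved block) strictly dominates including t0 *)
  (forall L : profile w m, valid_profile cI L ->
     exists b' : seq (tx w m),
       [/\ valid_block cB b', (inl t0 : tx w m) \notin b', approved_cond cB L b' &
           forall b, valid_block cB b -> (inl t0 : tx w m) \in b ->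
             u_BP cB t0 r s B1 pBP L b < u_BP cB t0 r s B1 pBP L b'])
  /\
  (* hence no Nash equilibrium includes t0 in the block *)
  (forall (L : profile w m) (beta : profile w m -> seq (tx w m)),
     is_NE cI cB t0 r s B1 Bj pBP pI L beta -> (inl t0 : tx w m) \notin beta L).
Proof.
move=> s0 r0 fBP0 fCM0 HpBPt0 HpBP0 _ _ _ HB1.
have r0s : 0 <= r * s by rewrite mulr_ge0 // ltW.
have part1 : forall L : profile w m, valid_profile cI L ->
     exists b' : seq (tx w m),
       [/\ valid_block cB b', (inl t0 : tx w m) \notin b', approved_cond cB L b' &
           forall b, valid_block cB b -> (inl t0 : tx w m) \in b ->
             u_BP cB t0 r s B1 pBP L b < u_BP cB t0 r s B1 pBP L b'].
  move=> L _.
  pose D : {set 'I_w} := ~: [set t0].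
  have cD : #|D| = w.-1 by rewrite cardsC1 card_ord.
  pose k := minn cB #|D|.
  pose F (A : {set 'I_w}) := \sum_(i in A) pBP i L.
  have [A0 [_ A0D A0k]] := @extend_set _ D set0 k (sub0set D)
     ltac:(by rewrite cards0 /= geq_minr).
  have [Am /andP[AmD /eqP Amk] Hmax] :=
     @fin_max _ R (fun A : {set 'I_w} => (A \subset D) && (#|A| == k)) F A0
       ltac:(by rewrite /= A0D A0k eqxx).
  pose fk := [seq (inr (None, n) : tx w m) | n <- iota 0 (cB - k)].
  pose b' := [seq (inl i : tx w m) | i <- enum Am] ++ fk.
  have memfk : forall i, (inl i : tx w m) \in fk = false.
    by move=> i; apply/mapP => -[].
  have memb' : forall i, (inl i : tx w m) \in b' = (i \in Am).
    move=> i; rewrite mem_cat memfk orbF.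
    by rewrite (mem_map (fun x y (e : inl x = inl y) => ltac:(by case: e))) mem_enum.
  have kcB : (k <= cB)%N by rewrite geq_minl.
  have sizeb' : size b' = cB.
    by rewrite size_cat !size_map size_iota -cardE Amk subnKC.
  have countb' : count (@fake_of_BP w m) b' = (cB - k)%N.
    rewrite count_cat !count_map.
    rewrite (@eq_count _ _ pred0) ?count_pred0 //.
    by rewrite (@eq_count _ _ predT) ?count_predT ?size_iota.
  have t0b' : (inl t0 : tx w m) \notin b'.
    rewrite memb'; apply/negP => /(subsetP AmD); by rewrite !inE eqxx.
  have Vb' : valid_block cB b'.
    apply/and3P; split.
    - rewrite cat_uniq; apply/and3P; split.
      + rewrite map_inj_uniq ?enum_uniq // => x y e; by case: e.
      + apply/hasPn => t /mapP [n _ ->]; by apply/mapP => -[].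
      + rewrite map_inj_uniq ?iota_uniq // => x y e; by case: e.
    - by rewrite sizeb'.
    - rewrite all_cat; apply/andP; split; apply/allP => t /mapP [x _ ->] //.
  have apb' : approved_cond cB L b' by rewrite /approved_cond sizeb' leqnn.
  have ub' : u_BP cB t0 r s B1 pBP L b' = F Am - r * s * (cB - k)%:R + B1.
    rewrite /u_BP apb' (negbTE t0b') countb'; congr (_ - _ + _).
    by apply: eq_bigl => i; rewrite memb'.
  have Hk : (cB - k)%:R <= Num.max (cB%:R - w%:R + 1) 0 :> R.
    rewrite le_max; case: (leqP cB w.-1) => h.
      have -> : (cB - k = 0)%N by rewrite /k cD; lia.
      by rewrite lexx orbT.
    have e : ((cB - k) + w = cB + 1)%N by have := ltn_ord t0; rewrite /k cD; lia.
    apply/orP; left; apply/eqP/eqP.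
    have := congr1 (fun n => n%:R : R) e; rewrite /= !natrD => e'.
    lra.
  have Fge0 : forall A, 0 <= F A by move=> A; apply: sumr_ge0 => i _.
  have key : fBP + F Am < F Am - r * s * (cB - k)%:R + B1.
    have : r * s * (cB - k)%:R <= r * s * Num.max (cB%:R - w%:R + 1) 0.
      by apply: ler_wpM2l.
    lra.
  exists b'; split => // b Vb t0b.
  rewrite ub'.
  have sumb : \sum_(i < w | inl i \in b) pBP i L <= fBP + F Am.
    pose S : {set 'I_w} := [set i | (inl i : tx w m) \in b].
    pose Ab := S :\ t0.
    have AbD : Ab \subset D.
      apply/subsetP => i; rewrite !inE => /andP[h _]; by rewrite h.
    have cS : (#|S| <= cB)%N.
      pose f := fun t : tx w m => if t is inl i then Some i else None.
      apply: (@leq_trans #|pmap f b|).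
        apply: subset_leq_card; apply/subsetP => i; rewrite inE => ib.
        by rewrite mem_pmap; apply/mapP; exists (inl i).
      apply: (leq_trans (card_size _)); rewrite size_pmap.
      apply: (leq_trans (count_size _ _)).
      by case/and3P: Vb.
    have cAb : (#|Ab| <= k)%N.
      rewrite leq_min (subset_leq_card AbD) andbT.
      have : t0 \in S by rewrite inE.
      move=> tS; have h := cardsD1 t0 S; rewrite tS in h; rewrite /Ab; apply: leq_trans cS; rewrite h; exact: leq_addl.
    have [A' [AbA' A'D A'k]] := @extend_set _ D Ab k AbD
        ltac:(by rewrite cAb /= geq_minr).
    rewrite (bigD1 t0) //= HpBPt0 lerD2l.
    apply: (@le_trans _ _ (F A')); last by apply: Hmax; rewrite A'D A'k eqxx.
    rewrite /F [X in _ <= X](bigID (fun i => i \in Ab)) /=.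
    have -> : \sum_(i in A' | i \in Ab) pBP i L = \sum_(i in Ab) pBP i L.
      apply: eq_bigl => i; apply/andP/idP => [[]//|h]; split=> //.
      exact: (subsetP AbA').
    rewrite -[X in X <= _]addr0 lerD ?sumr_ge0 // le_eqVlt; apply/orP; left.
    by apply/eqP; apply: eq_bigl => i; rewrite !inE andbC.
  rewrite /u_BP t0b addr0.
  case: (approved_cond cB L b).
    have : 0 <= r * s * (count (@fake_of_BP w m) b)%:R by rewrite mulr_ge0.
    lra.
  have := Fge0 Am; lra.
split=> // L beta [VL Vbeta Hbest _]; apply/negP => Hin.
have [b' [Vb' _ _ Hlt]] := part1 L VL.
have := Hbest b' Vb'; have := Hlt _ (Vbeta L VL) Hin.
by rewrite ltNge => /negP.
Qed.
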